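(* Suppose that $n=2^i(2k+1)$, where $i\ge 1$ and $k\ge 0$ are integers. Then: (1) if $i=1$, then $(n-1)!!\equiv 2k+1 \pmod n$; (2) if $i=2$, then $(n-1)!!\equiv -(2k+1)^2 \pmod n$; (3) if $i>2$, then $(n-1)!!\equiv (2k+1)^{2^{i-2}} \pmod n$.
   Context: For a natural number $m$, the double factorial $m!!$ is the product of the natural numbers less than or equal to $m$ that have the same parity as $m$; thus for even $n$, $(n-1)!!$ is the product of all odd natural numbers less than $n$. *)

(* Defs.v *)
From mathcomp Require Import all_boot all_order all_algebra.
Set Implicit Arguments. Unset Strict Implicit. Unset Printing Implicit Defensive.

Fixpoint dfact (m : nat) : nat :=
  match m with
  | 0 => 1
  | 1 => 1
  | (m'.+2) as p => p * dfact m'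
  end.

(* Main.v *)
Require Import Defs.
From mathcomp Require Import all_boot all_order all_algebra.
From mathcomp Require Import zify ring lra.
Import GRing.Theory Num.Theory.
Local Open Scope ring_scope.

Definition cg (d a b : int) := (d %| a - b)%Z.

Lemma cg_refl d a : cg d a a.
Proof. by rewrite /cg subrr dvdz0. Qed.

Lemma cg_sym d a b : cg d a b -> cg d b a.
Proof. by rewrite /cg -opprB rpredN. Qed.

Lemma cg_trans d a b c : cg d a b -> cg d b c -> cg d a c.
Proof.
rewrite /cg => h1 h2; have -> : a - c = (a - b) + (b - c) by ring.
exact: rpredD.
Qed.

Lemma cg_mul d a b c e : cg d a b -> cg d c e -> cg d (a * c) (b * e).
Proof.
rewrite /cg => h1 h2; have -> : a * c - b * e = (a - b) * c + b * (c - e) by ring.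
by apply: rpredD; [apply: dvdz_mulr | apply: dvdz_mull].
Qed.

Lemma cg_exp d a b n : cg d a b -> cg d (a ^+ n) (b ^+ n).
Proof.
move=> h; elim: n => [|n IH]; first exact: cg_refl.
by rewrite !exprS; apply: cg_mul.
Qed.

Lemma cg_prod d N (f g : 'I_N -> int) :
  (forall t, cg d (f t) (g t)) -> cg d (\prod_(t < N) f t) (\prod_(t < N) g t).
Proof.
move=> h; apply: (big_ind2 (cg d)) => //; first exact: cg_refl.
by move=> ? ? ? ?; apply: cg_mul.
Qed.

Lemma cg_dvd d d' a b : (d' %| d)%Z -> cg d a b -> cg d' a b.
Proof. move=> h1 h2; exact: dvdz_trans h2. Qed.

Definition F (N : nat) : int := \prod_(t < N) (2 * (t : nat)%:Z + 1).

Lemma dfactS N : dfact (2 * N).+1 = ((2 * N).+1 * dfact (2 * N).-1)%N.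
Proof.
case: N => [|N] //.
Qed.

Lemma dfactF N : (dfact (2 * N).-1)%:Z = F N.
Proof.
elim: N => [|N IH]; first by rewrite /F big_ord0.
have -> : (2 * N.+1).-1 = (2 * N).+1 by lia.
rewrite dfactS PoszM IH /F big_ord_recr /= mulrC; congr (_ * _).
by rewrite -addn1 PoszD PoszM.
Qed.

Lemma F_add a b : F (a + b) = F a * \prod_(t < b) (2 * (a + t)%:Z + 1).
Proof.
by rewrite /F big_split_ord /=.
Qed.

Lemma F_blocks M j : cg (2 * M%:Z) (F (M * j)) (F M ^+ j).
Proof.
elim: j => [|j IH]; first by rewrite muln0 expr0 /F big_ord0; exact: cg_refl.
rewrite mulnS addnC F_add exprSr; apply: cg_mul => //.
apply: cg_prod => t; rewrite /cg.
have -> : 2 * (M * j + t)%:Z + 1 - (2 * t%:Z + 1) = (2 * M%:Z) * j%:Z.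
  by rewrite PoszD PoszM; ring.
exact: dvdz_mulr.
Qed.

Lemma F_pair M : cg (4 * M%:Z) (F (M + M)) ((-1) ^+ M * F M ^+ 2).
Proof.
rewrite F_add expr2 mulrCA; apply: cg_mul; first exact: cg_refl.
rewrite (reindex_inj rev_ord_inj) /=.
have -> : (-1) ^+ M * F M = \prod_(t < M) (- (2 * (t : nat)%:Z + 1)).
  by rewrite prodrN card_ord.
apply: cg_prod => t; rewrite /cg.
have ht := ltn_ord t.
have -> : 2 * (M + (M - t.+1)%N)%:Z + 1 - - (2 * t%:Z + 1) = 4 * M%:Z.
  lia.
  
by apply/dvdzP; exists 1; rewrite mul1r.
Qed.

Lemma sq_step a x : (0 < a)%N -> cg (2 ^+ a) x 1 -> cg (2 ^+ a.+1) (x ^+ 2) 1.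
Proof.
move=> ha /dvdzP [q hq]; apply/dvdzP; exists (q * (q * 2 ^+ a.-1 + 1)).
have -> : x = q * 2 ^+ a + 1 by rewrite -hq; ring.
case: a ha {hq} => // a _ /=.
rewrite !exprS; ring.
Qed.

Lemma odd_sq8 (k : nat) : cg 8 ((2 * k%:Z + 1) ^+ 2) 1.
Proof.
apply/dvdzP; rewrite -(odd_double_half k).
case: (odd k) => /=; rewrite -!muln2 PoszD PoszM.
  exists (((k./2)%:Z * 2 + 1) * (k./2%:Z + 1)); ring.
exists (k./2%:Z * (2 * k./2%:Z + 1)); ring.
Qed.

Lemma pow2z j : (2 ^ j)%:Z = 2 ^+ j.
Proof. by rewrite -natz natrX. Qed.

Lemma F_pow2 a : cg (2 ^+ a.+3) (F (2 ^ a.+2)) 1.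
Proof.
elim: a => [|a IH].
  by rewrite /F !big_ord_recr big_ord0 /=; apply/dvdzP; exists 13.
have -> : (2 ^ a.+3 = 2 ^ a.+2 + 2 ^ a.+2)%N by rewrite expnS; lia.
have E : 2 ^+ a.+4 = 4 * (2 ^ a.+2)%:Z :> int by rewrite pow2z !exprS; ring.
rewrite E; apply: cg_trans (F_pair _) _.
rewrite -signr_odd oddX /= expr0 mul1r -E.
exact: sq_step.
Qed.

Lemma oddpow (k a : nat) : cg (2 ^+ a.+3) ((2 * k%:Z + 1) ^+ (2 ^ a.+1)) 1.
Proof.
elim: a => [|a IH]; first exact: odd_sq8.
rewrite expnS mulnC exprM; exact: sq_step.
Qed.

Lemma nat_of_cg (n a b : nat) : cg n%:Z a%:Z b%:Z -> (a = b %[mod n])%N.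
Proof.
rewrite /cg -eqz_mod_dvd !modz_nat => /eqP h; by case: h.
Qed.

Lemma finish (M m : nat) (X T : int) : odd m -> (0 < M)%N ->
  (exists j, M = 2 ^ j)%N ->
  cg (2 * M%:Z) X T -> (m%:Z %| X)%Z -> (m%:Z %| T)%Z ->
  cg ((2 * M * m)%N)%:Z X T.
Proof.
move=> om _ [j ->] h1 h2 h3; rewrite /cg PoszM Gauss_dvdz.
  by apply/andP; split; [rewrite PoszM; exact: h1 | rewrite rpredB].
rewrite coprimezE /= -expnS coprime_pexpl // coprime2n //.
Qed.

Lemma m_dvd (M k : nat) : (0 < M)%N -> ((2 * k + 1)%N%:Z %| F (M * (2 * k + 1)))%Z.
Proof.
move=> hM; have hk : (k < M * (2 * k + 1))%N by nia.
rewrite /F (bigD1 (Ordinal hk)) //=; apply: dvdz_mulr.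
by rewrite PoszD PoszM.
Qed.

Local Close Scope ring_scope.
Theorem theorem14 (i k : nat) (hi : 1 <= i) :
  let n := 2 ^ i * (2 * k + 1) in
  [/\ (i = 1 -> (dfact n.-1 = (2 * k + 1) %[mod n])%N),
      (i = 2 -> ((dfact n.-1)%:Z = - ((2 * k + 1) ^ 2)%:Z %[mod n%:Z])%Z) &
      (2 < i -> (dfact n.-1 = (2 * k + 1) ^ (2 ^ (i - 2)) %[mod n])%N)].
Proof.
Local Open Scope ring_scope.
case: i hi => // i' _ n.
set m := (2 * k + 1)%N.
set M := (2 ^ i')%N.
have om : odd m by rewrite /m addn1 /= oddM.
have hM : (0 < M)%N by rewrite expn_gt0.
have hn : n = (2 * M * m)%N by rewrite /n /M expnS.
have hX : (dfact n.-1)%:Z = F (M * m).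
  by rewrite hn -mulnA dfactF.
have hB := F_blocks M m.
have hD : (m%:Z %| F (M * m))%Z by apply: m_dvd.
have mz : m%:Z = 2 * k%:Z + 1 by rewrite /m PoszD PoszM.
split.
- move=> [e]; rewrite e in M hM hn hX hB hD *.
  apply: nat_of_cg; rewrite hX hn; apply: finish => //; first by exists 0%N.
  + apply: cg_trans hB _; rewrite /M /F big_ord1 /= expr1n.
    apply/dvdzP; exists (- k%:Z); rewrite mz; ring.
- move=> [e]; rewrite e in M hM hn hX hB hD *.
  apply/eqP; rewrite eqz_mod_dvd -/(cg _ _ _) hX hn.
  apply: finish => //; first by exists 1%N.
  + apply: cg_trans hB _.
    have -> : F M = 3 by rewrite /M /F !big_ord_recr big_ord0 /=.
    apply: (@cg_trans _ _ ((-1) ^+ m)).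
      by apply: cg_exp; apply/dvdzP; exists 1.
    rewrite -signr_odd om expr1.
    have h8 := odd_sq8 k.
    rewrite /cg; have -> : -1 - - (m ^ 2)%N%:Z = (2 * k%:Z + 1) ^+ 2 - 1.
      by rewrite -natz natrX natz mz; ring.
    apply: dvdz_trans h8; rewrite /M; by apply/dvdzP; exists 2.
  + by rewrite rpredN PoszM; apply: dvdz_mulr; apply/dvdzP; exists 1; rewrite mul1r.
- move=> hi; have [a ea] : exists a, i' = a.+2 by exists (i' - 2)%N; lia.
  rewrite ea in M hM hn hX hB hD *.
  have -> : (a.+3 - 2 = a.+1)%N by lia.
  have hT : (m ^ 2 ^ a.+1)%N%:Z = m%:Z ^+ (2 ^ a.+1) by rewrite -natz natrX natz.
  apply: nat_of_cg; rewrite hX hn hT; apply: finish => //; first by exists a.+2.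
  + apply: cg_trans hB _.
    have -> : 2 * M%:Z = 2 ^+ a.+3 by rewrite /M pow2z exprS.
    apply: (@cg_trans _ _ (1 ^+ m)); first by apply: cg_exp; apply: F_pow2.
    rewrite expr1n mz; apply: cg_sym; exact: oddpow.
  + apply: dvdz_exp; first by rewrite expn_gt0.
    by apply/dvdzP; exists 1; rewrite mul1r.
Qed.
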